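(* Let $R=(v_1,\dots,v_\ell)$ be a route and $\xi\in[N]$. For any vector $y^\xi\in\mathbb{Z}^{V_+}_{\ge0}$, we have $y^\xi\in\mathcal{Y}^\xi(\vec R)$ if and only if there exist $f\in\mathbb{R}^A_{\ge0}$ and $g\in\mathbb{R}^{V_+}_{\ge0}$ such that $f_{(v_{i-1},v_i)}+f_{(v_{i+1},v_i)}+d^\xi(v_i)=f_{(v_i,v_{i+1})}+f_{(v_i,v_{i-1})}+g_{v_i}$ for all $i\in[\ell]$; $f_{(v_{i-1},v_i)}\le C/2$ and $f_{(v_i,v_{i-1})}\le C/2$ for all $i\in[\ell+1]$; and $g_{v_i}\le C\,y^\xi_{v_i}$ for all $i\in[\ell]$. In particular, $\mathcal{Y}^\xi(\vec R)=\mathcal{Y}^\xi(\overleftarrow{R})$.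
   Context: $G=(V,E)$ complete undirected graph with $V=\{0\}\cup V_+$ ($0$ depot, $V_+$ customers); $D=(V,A)$ replaces each edge by two opposite arcs. Capacity $C\in\mathbb{Q}_{>0}$; scenarios $\xi\in[N]$ with demand vectors $d^\xi\in\mathbb{Q}^{V_+}_{\ge0}$, $d^\xi(v)\le C$. A route $R=(v_1,\dots,v_\ell)$ is the cycle $0,v_1,\dots,v_\ell,0$ through distinct customers; $v_0=v_{\ell+1}=0$. Its two directed versions are $\vec R=(v_1,\dots,v_\ell)$ (arcs $(0,v_1),(v_1,v_2),\dots,(v_\ell,0)$) and $\overleftarrow R=(v_\ell,\dots,v_1)$. For a directed route $(u_1,\dots,u_\ell)$ (with $u_0=u_{\ell+1}=0$) and scenario $\xi$, $\mathcal{Y}^\xi$ of it is the set of integer vectors $y^\xi\in\mathbb{Z}^{V_+}_{\ge0}$ for which there exist $f\in\mathbb{R}^A_{\ge0}$, $g\in\mathbb{R}^{V_+}_{\ge0}$ with $f_{(u_{i-1},u_i)}+d^\xi(u_i)=f_{(u_i,u_{i+1})}+g_{u_i}$ for $i\in[\ell]$, $f_{(u_{i-1},u_i)}\le C$ for $i\in[\ell+1]$, and $g_{u_i}\le Cy^\xi_{u_i}$ for $i\in[\ell]$. *)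

(* Defs.v *)
From HB Require Import structures.
From mathcomp Require Import all_boot all_order all_algebra.
From mathcomp Require Import reals.
Set Implicit Arguments. Unset Strict Implicit. Unset Printing Implicit Defensive.
Import Order.TTheory GRing.Theory Num.Theory.
Local Open Scope ring_scope.

(* Customers V_+ form a finite type T; vertices V = option T with the depot
   0 encoded as None.  Arcs are ordered pairs (u,w) of distinct vertices; an
   arc flow f in R^A is represented by a function option T -> option T -> R
   (its values on the non-arcs (u,u) are irrelevant). *)

(* A (directed) route (u_1,...,u_l) is a sequence s of customers.
   [rpt s i] is u_i, with u_0 = u_{l+1} = 0 (the depot). *)
Definition rpt (T : Type) (s : seq T) (i : nat) : option T :=
  nth None (None :: map Some s ++ [:: None]) i.

Definition is_route (T : eqType) (s : seq T) : Prop := uniq s /\ (0 < size s)%N.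

(* Membership of y in Y^xi of the directed route s, where d is the demand
   vector d^xi of the scenario and C the capacity. *)
Definition inY (R : realType) (T : finType) (C : rat) (d : T -> rat)
    (s : seq T) (y : T -> int) : Prop :=
  (forall v, 0 <= y v) /\
  exists (f : option T -> option T -> R) (g : T -> R),
    (forall u w, u != w -> 0 <= f u w) /\
    (forall v, 0 <= g v) /\
    (forall i v, (0 < i <= size s)%N -> rpt s i = Some v ->
       f (rpt s i.-1) (rpt s i) + ratr (d v) = f (rpt s i) (rpt s i.+1) + g v) /\
    (forall i, (0 < i <= (size s).+1)%N -> f (rpt s i.-1) (rpt s i) <= ratr C) /\
    (forall i v, (0 < i <= size s)%N -> rpt s i = Some v ->
       g v <= ratr C * (y v)%:~R).

(* Main.v *)
Require Import Defs.
From HB Require Import structures.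
From mathcomp Require Import all_boot all_order all_algebra.
From mathcomp Require Import reals.
From mathcomp Require Import zify lra.
Set Implicit Arguments. Unset Strict Implicit. Unset Printing Implicit Defensive.
Import Order.TTheory GRing.Theory Num.Theory.
Local Open Scope ring_scope.

Lemma rptE (T : Type) (x0 : T) (s : seq T) i :
  rpt s i = if (0 < i <= size s)%N then Some (nth x0 s i.-1) else None.
Proof.
rewrite /rpt; case: i => [|k] //=.
rewrite nth_cat size_map; case: ltnP => h.
  by rewrite (nth_map x0).
by case: (k - size s)%N => [|[]].
Qed.

Lemma rpt_rev (T : Type) (s : seq T) i :
  rpt (rev s) i = rpt s ((size s).+1 - i).
Proof.
case: s => [|x0 s']; first by rewrite /rpt /=; case: i => [|[|[|k]]].
set s := x0 :: s'.
rewrite !(@rptE _ x0) size_rev.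
case: ifP => h.
  rewrite ifT; last by lia.
  rewrite nth_rev; last by lia.
  congr (Some (nth _ _ _)); lia.
by rewrite ifF //; lia.
Qed.

Lemma rpt_inj (T : eqType) (s : seq T) i j :
  uniq s -> (i <= (size s).+1)%N -> (j <= (size s).+1)%N -> rpt s i = rpt s j ->
  i = j \/ ((i = 0 \/ i = (size s).+1) /\ (j = 0 \/ j = (size s).+1))%N.
Proof.
case: s => [|x0 s'] Hu Hi Hj; first by move=> _; move: Hi Hj => /=; lia.
rewrite !(@rptE _ x0); case: ifP => h1; case: ifP => h2 // .
- case=> /eqP; rewrite nth_uniq //; [move/eqP; lia|lia|lia].
- move=> _; lia.
Qed.

Lemma rpt_neq (T : eqType) (s : seq T) j :
  uniq s -> (0 < size s)%N -> (0 < j <= (size s).+1)%N -> rpt s j.-1 != rpt s j.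
Proof.
move=> Hu Hs Hj; apply/eqP => /rpt_inj => /(_ Hu); lia.
Qed.

Definition fwd (T : eqType) (s : seq T) (u w : option T) : bool :=
  has (fun j => (rpt s j.-1 == u) && (rpt s j == w)) (iota 1 (size s).+1).

Lemma fwdP (T : eqType) (s : seq T) u w :
  reflect (exists j, (0 < j <= (size s).+1)%N /\ rpt s j.-1 = u /\ rpt s j = w)
          (fwd s u w).
Proof.
apply: (iffP hasP).
  move=> [j]; rewrite mem_iota => Hj /andP[/eqP h1 /eqP h2]; exists j; split=> //; lia.
move=> [j [Hj [h1 h2]]]; exists j; first by rewrite mem_iota; lia.
by rewrite h1 h2 !eqxx.
Qed.

Lemma fwd_arc (T : eqType) (s : seq T) j :
  (0 < j <= (size s).+1)%N -> fwd s (rpt s j.-1) (rpt s j).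
Proof. by move=> Hj; apply/fwdP; exists j. Qed.

Lemma collision (T : eqType) (s : seq T) k :
  uniq s -> (0 < size s)%N -> (0 < k <= (size s).+1)%N ->
  fwd s (rpt s k) (rpt s k.-1) -> size s = 1%N.
Proof.
move=> Hu Hs Hk /fwdP [j [Hj [h1 h2]]].
have A1 := @rpt_inj _ s j.-1 k Hu ltac:(lia) ltac:(lia) h1.
have A2 := @rpt_inj _ s j k.-1 Hu ltac:(lia) ltac:(lia) h2.
lia.
Qed.

Section Main.
Variables (R : realType) (T : finType) (C : rat) (dd : T -> rat) (y : T -> int).

Definition Bi (s : seq T) : Prop :=
   exists (f : option T -> option T -> R) (g : T -> R),
     (forall u w, u != w -> 0 <= f u w) /\
     (forall v, 0 <= g v) /\
     (forall i v, (0 < i <= size s)%N -> rpt s i = Some v ->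
        f (rpt s i.-1) (rpt s i) + f (rpt s i.+1) (rpt s i) + ratr (dd v)
        = f (rpt s i) (rpt s i.+1) + f (rpt s i) (rpt s i.-1) + g v) /\
     (forall i, (0 < i <= (size s).+1)%N ->
        f (rpt s i.-1) (rpt s i) <= ratr C / 2 /\
        f (rpt s i) (rpt s i.-1) <= ratr C / 2) /\
     (forall i v, (0 < i <= size s)%N -> rpt s i = Some v ->
        g v <= ratr C * (y v)%:~R).

Lemma Bi_rev s : Bi s -> Bi (rev s).
Proof.
move=> [f [g [Hf [Hg [Heq [Hb Hgb]]]]]].
exists f, g; rewrite size_rev; split=> //; split=> //; split; [|split].
- move=> i v Hi; rewrite !rpt_rev => Hv.
  have e1 : ((size s).+1 - i.-1 = ((size s).+1 - i).+1)%N by lia.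
  have e2 : ((size s).+1 - i.+1 = ((size s).+1 - i).-1)%N by lia.
  rewrite e1 e2.
  have := Heq ((size s).+1 - i)%N v ltac:(lia) Hv.
  lra.
- move=> i Hi; rewrite !rpt_rev.
  have e1 : ((size s).+1 - i.-1 = ((size s).+1 - i).+1)%N by lia.
  rewrite e1.
  have [h1 h2] := Hb ((size s).+1 - i).+1 ltac:(lia).
  by split.
- move=> i v Hi; rewrite !rpt_rev => Hv.
  exact: (Hgb ((size s).+1 - i)%N v ltac:(lia) Hv).
Qed.

Lemma charac s : (forall v, 0 <= y v) -> is_route s -> (inY R C dd s y <-> Bi s).
Proof.
move=> Hy [Hu Hs]; split.
- move=> [_ [f [g [Hf [Hg [Heq [Hb Hgb]]]]]]].
  set c : R := ratr C.
  pose F u w := if fwd s u w then f u w / 2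
                else if fwd s w u then (c - f w u) / 2 else 0.
  have HfB u w : fwd s u w -> 0 <= f u w <= c.
    move=> /fwdP [j [Hj [<- <-]]].
    by rewrite Hf ?rpt_neq //= Hb.
  have HF u w : 0 <= F u w <= c / 2.
    rewrite /F; case: ifP => h1.
      have := HfB _ _ h1; lra.
    case: ifP => h2; last by (have : 0 <= c / 2 by (have := HfB _ _ (@fwd_arc _ s 1%N ltac:(lia))); lra); lra.
    have := HfB _ _ h2; lra.
  exists F, g; split; [|split; [by []|split; [|split]]].
  + by move=> u w _; have := HF u w; lra.
  + move=> i v Hi Hv.
    have E := Heq i v Hi Hv.
    have Hi1 : (0 < i <= (size s).+1)%N by case/andP: Hi => -> H; exact: leqW H.
    have Hi2 : (0 < i.+1 <= (size s).+1)%N by case/andP: Hi => _ H; exact: H.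
    have Fa : F (rpt s i.-1) (rpt s i) = f (rpt s i.-1) (rpt s i) / 2.
      by rewrite /F fwd_arc.
    have Fb : F (rpt s i) (rpt s i.+1) = f (rpt s i) (rpt s i.+1) / 2.
      by rewrite /F (fwd_arc (j:=i.+1)).
    rewrite Fa Fb.
    case: (boolP (size s == 1%N)) => [/eqP hs1|hs1].
    * have i1 : i = 1%N by move: Hi; rewrite hs1; lia.
      subst i.
      have e20 : rpt s 2 = rpt s 0.
        clear -hs1; case: s hs1 => [|x [|x' s']] //.
      rewrite /= e20 in E Fb *.
      lra.
    * have n1 : fwd s (rpt s i.+1) (rpt s i.+1.-1) = false.
        apply/negP => /collision -/(_ Hu Hs ltac:(lia)) /eqP; by rewrite (negbTE hs1).
      have n2 : fwd s (rpt s i) (rpt s i.-1) = false.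
        apply/negP => /collision -/(_ Hu Hs ltac:(lia)) /eqP; by rewrite (negbTE hs1).
      rewrite /F /= n1 n2 (fwd_arc (j:=i.+1)) ?(fwd_arc (j:=i)) //=; try lia.
      rewrite -/c; lra.
  + by move=> i Hi; have := HF (rpt s i.-1) (rpt s i); have := HF (rpt s i) (rpt s i.-1); lra.
  + exact: Hgb.
- move=> [F [g [HF [Hg [Heq [Hb Hgb]]]]]].
  split=> //.
  set c : R := ratr C.
  pose f u w := if fwd s u w then F u w - F w u + c / 2 else 0.
  have HfB u w : fwd s u w -> 0 <= f u w <= c.
    rewrite /f => h; rewrite h; move: h => /fwdP [j [Hj [<- <-]]].
    have [h1 h2] := Hb j Hj.
    have h3 := HF _ _ (rpt_neq Hu Hs Hj).
    have h4 : 0 <= F (rpt s j) (rpt s j.-1) by apply: HF; rewrite eq_sym rpt_neq.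
    rewrite -/c in h1 h2; lra.
  exists f, g; split; [|split; [by []|split; [|split]]].
  + move=> u w _; rewrite /f; case: ifP => h; last by [].
    by have := HfB _ _ h; rewrite /f h; lra.
  + move=> i v Hi Hv.
    have E := Heq i v Hi Hv.
    rewrite /f fwd_arc ?(fwd_arc (j:=i.+1)) //=; try lia.
    lra.
  + by move=> i Hi; have := HfB _ _ (fwd_arc Hi); lra.
  + exact: Hgb.
Qed.
End Main.

Theorem lemma1 (R : realType) (T : finType) (C : rat) (N : nat)
    (d : 'I_N -> T -> rat)
    (HC : 0 < C) (Hd : forall xi v, 0 <= d xi v <= C)
    (s : seq T) (Hs : is_route s) (xi : 'I_N) (y : T -> int)
    (Hy : forall v, 0 <= y v) :
  (inY R C (d xi) s y <->
   exists (f : option T -> option T -> R) (g : T -> R),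
     (forall u w, u != w -> 0 <= f u w) /\
     (forall v, 0 <= g v) /\
     (forall i v, (0 < i <= size s)%N -> rpt s i = Some v ->
        f (rpt s i.-1) (rpt s i) + f (rpt s i.+1) (rpt s i) + ratr (d xi v)
        = f (rpt s i) (rpt s i.+1) + f (rpt s i) (rpt s i.-1) + g v) /\
     (forall i, (0 < i <= (size s).+1)%N ->
        f (rpt s i.-1) (rpt s i) <= ratr C / 2 /\
        f (rpt s i) (rpt s i.-1) <= ratr C / 2) /\
     (forall i v, (0 < i <= size s)%N -> rpt s i = Some v ->
        g v <= ratr C * (y v)%:~R))
  /\ (inY R C (d xi) s y <-> inY R C (d xi) (rev s) y).
Proof.
split; first exact: (charac R C (d xi) Hy Hs).
have Hs' : is_route (rev s) by case: Hs => Hu Hl; split; rewrite ?rev_uniq ?size_rev.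
rewrite (charac R C (d xi) Hy Hs) (charac R C (d xi) Hy Hs').
split; first exact: Bi_rev.
by move=> /Bi_rev; rewrite revK.
Qed.
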